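(* Let $\mathcal C$ be a clustering problem, and let $P\in\mathcal P(\mathcal X)^K$ with $\tfrac12\ge p_{\min}=\min_{i\in[K]}\min_{a\in\mathcal X}P_i(a)>0$. Let $\epsilon\in(0,p_{\min}/2)$. Then for all $Q\in\mathcal P(\mathcal X)^K$ with $\|P-Q\|_\infty\le\epsilon$, all $w\in\mathrm{int}(\Sigma_K)$ and all $\sigma\in\mathcal C$, $$|g_P^\sigma(w)-g_Q^\sigma(w)|\le E\epsilon,\qquad |G_P^\sigma(w)-G_Q^\sigma(w)|\le E\epsilon,\qquad E=|\mathcal X|\log\frac{2-p_{\min}}{p_{\min}}.$$
   Context: Framework. Let $\mathcal X$ be a finite alphabet with $|\mathcal X|\ge2$, $\mathcal P(\mathcal X)$ the set of probability distributions on $\mathcal X$, and $K\ge2$ an integer (number of arms); $[n]=\{1,\dots,n\}$. A hypothesis is a collection $\sigma=\{\mathcal A_1^\sigma,\dots,\mathcal A_{M_\sigma}^\sigma\}$ ($M_\sigma\ge1$) of pairwise disjoint subsets of $[K]$, each of cardinality at least 2 (clusters). A clustering problem is a finite set $\mathcal C$ of hypotheses with $|\mathcal C|\ge2$. For $P,Q\in\mathcal P(\mathcal X)^K$, $\|P-Q\|_\infty=\max_{i\in[K]}\max_{a\in\mathcal X}|P_i(a)-Q_i(a)|$. Functions. $D(P\|Q)$ is the KL divergence. $\Sigma_K=\{w\in\mathbb R^K: w_i\ge0,\sum_iw_i=1\}$, $\mathrm{int}(\Sigma_K)$ its relative interior (all $w_i>0$). For $\mathcal A\subseteq[K]$, $G(P_{\mathcal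 A},w_{\mathcal A})=0$ if $w_i=0$ for all $i\in\mathcal A$, and otherwise $G(P_{\mathcal A},w_{\mathcal A})=\sum_{i\in\mathcal A}w_iD(P_i\|W)$ with $W=\sum_{i\in\mathcal A}w_iP_i/\sum_{i\in\mathcal A}w_i$. For $\sigma\in\mathcal C$, $g_P^\sigma(w)=\sum_{m=1}^{M_\sigma}G(P_{\mathcal A_m^\sigma},w_{\mathcal A_m^\sigma})$ and $G_P^\sigma(w)=\min_{\sigma'\in\mathcal C\setminus\{\sigma\}}g_P^{\sigma'}(w)$. *)

(* Defs.v *)
From HB Require Import structures.
From mathcomp Require Import all_boot all_order all_algebra.
From mathcomp Require Import all_classical all_reals exp.
Set Implicit Arguments. Unset Strict Implicit. Unset Printing Implicit Defensive.
Import Order.TTheory GRing.Theory Num.Theory.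
Local Open Scope ring_scope.

Section Defs.
Variables (R : realType) (X : finType) (K : nat).

Definition is_dist (p : X -> R) : Prop :=
  (forall a, 0 <= p a) /\ \sum_(a : X) p a = 1.
Definition is_dist_vec (P : 'I_K -> X -> R) : Prop := forall i, is_dist (P i).

(* KL divergence, with the convention 0 log(0/q) = 0 *)
Definition KL (p q : X -> R) : R :=
  \sum_(a : X) (if p a == 0 then 0 else p a * ln (p a / q a)).

Definition Gclu (P : 'I_K -> X -> R) (A : {set 'I_K}) (w : 'I_K -> R) : R :=
  if [forall i in A, w i == 0] then 0
  else let W := fun a => (\sum_(i in A) w i * P i a) / (\sum_(i in A) w i) in
       \sum_(i in A) w i * KL (P i) W.

Definition is_hypothesis (s : {set {set 'I_K}}) : Prop :=
  s != finset.set0 /\ (forall A, A \in s -> (2 <= #|A|)%N) /\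
  (forall A B, A \in s -> B \in s -> A != B -> [disjoint A & B]).

Definition is_clustering_problem (C : {set {set {set 'I_K}}}) : Prop :=
  (2 <= #|C|)%N /\ forall s, s \in C -> is_hypothesis s.

Definition gsig (P : 'I_K -> X -> R) (s : {set {set 'I_K}}) (w : 'I_K -> R) : R :=
  \sum_(A in s) Gclu P A w.

Definition Gsig (C : {set {set {set 'I_K}}}) (P : 'I_K -> X -> R)
    (s : {set {set 'I_K}}) (w : 'I_K -> R) : R :=
  match [pick s' in C :\ s] with
  | Some s0 => \big[Num.min/ gsig P s0 w]_(s' in C :\ s) gsig P s' w
  | None => 0
  end.

Definition in_int_simplex (w : 'I_K -> R) : Prop :=
  (forall i, 0 < w i) /\ \sum_(i < K) w i = 1.

(* p_min = min_i min_a P_i(a); the seed 1 is harmless since entries are <= 1 *)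
Definition pmin (P : 'I_K -> X -> R) : R :=
  \big[Num.min/ 1]_(i < K) \big[Num.min/ 1]_(a : X) P i a.

Definition supdist (P Q : 'I_K -> X -> R) : R :=
  \big[Num.max/ 0]_(i < K) \big[Num.max/ 0]_(a : X) `|P i a - Q i a|.

End Defs.

(* Main.v *)
Require Import Defs.
From HB Require Import structures.
From mathcomp Require Import all_boot all_order all_algebra.
From mathcomp Require Import all_classical all_reals exp.
From mathcomp Require Import ring lra.
Import Order.TTheory GRing.Theory Num.Theory.
Local Open Scope ring_scope.

Section Aux.
Variable R : realType.

Lemma ln_le_sub1 (x : R) : 0 < x -> ln x <= x - 1.
Proof.
move=> x0; rewrite -ler_expR lnK ?posrE //.
by have := expR_ge1Dx (x - 1); rewrite addrC subrK.
Qed.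

Lemma xlnx_one (x y c a b : R) : 0 < a -> a <= x <= b -> a <= y <= b -> a <= c <= b ->
  y <= x ->
  `| x * (ln x - ln c) - y * (ln y - ln c) - (x - y)| <= (x - y) * (ln b - ln a).
Proof.
move=> a0 /andP[ax xb] /andP[ay yb] /andP[ac cb] yx.
have x0 : 0 < x by apply: lt_le_trans ax.
have y0 : 0 < y by apply: lt_le_trans ay.
have c0 : 0 < c by apply: lt_le_trans ac.
have b0 : 0 < b by apply: lt_le_trans xb.
have h1 : ln (y / x) <= y / x - 1 by apply: ln_le_sub1; rewrite divr_gt0.
have h2 : ln (x / y) <= x / y - 1 by apply: ln_le_sub1; rewrite divr_gt0.
rewrite !ln_div ?posrE // in h1 h2.
have h1' : x * (ln y - ln x) <= y - x.
  have e : x * (y / x) = y by rewrite mulrCA divff ?gt_eqF ?mulr1.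
  by have := ler_wpM2l (ltW x0) h1; rewrite [X in _ <= X]mulrBr mulr1 e.
have h2' : y * (ln x - ln y) <= x - y.
  have e : y * (x / y) = x by rewrite mulrCA divff ?gt_eqF ?mulr1.
  by have := ler_wpM2l (ltW y0) h2; rewrite [X in _ <= X]mulrBr mulr1 e.
have la_y : ln a <= ln y by rewrite ler_ln ?posrE.
have la_x : ln a <= ln x by rewrite ler_ln ?posrE.
have lc_b : ln c <= ln b by rewrite ler_ln ?posrE.
have la_c : ln a <= ln c by rewrite ler_ln ?posrE.
have lx_b : ln x <= ln b by rewrite ler_ln ?posrE.
have p1 : 0 <= (x - y) * (ln y - ln c - ln a + ln b).
  by apply: mulr_ge0; lra.
have p2 : 0 <= (x - y) * (ln b - ln a - ln x + ln c).
  by apply: mulr_ge0; lra.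
rewrite ler_norml; apply/andP; split; nra.
Qed.

Lemma xlnx_abs (x y c a b : R) : 0 < a -> a <= x <= b -> a <= y <= b -> a <= c <= b ->
  `| x * (ln x - ln c) - y * (ln y - ln c) - (x - y)| <= `|x - y| * (ln b - ln a).
Proof.
move=> a0 hx hy hc; case: (leP y x) => [yx|xy].
  by rewrite [`|x - y|]ger0_norm ?subr_ge0 //; apply: xlnx_one.
have -> : x * (ln x - ln c) - y * (ln y - ln c) - (x - y) =
   - (y * (ln y - ln c) - x * (ln x - ln c) - (y - x)) by ring.
rewrite normrN (distrC x y) [`|y - x|]ger0_norm ?subr_ge0 ?(ltW xy) //; apply: xlnx_one => //.
exact: ltW.
Qed.

Variable X : finType.

Lemma sum_bound (p q v : X -> R) (a b eps : R) : 0 < a -> a <= b ->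
  (forall z, a <= p z <= b) -> (forall z, a <= q z <= b) -> (forall z, a <= v z <= b) ->
  \sum_z p z = \sum_z q z -> (forall z, `|p z - q z| <= eps) ->
  `| \sum_z p z * (ln (p z) - ln (v z)) - \sum_z q z * (ln (q z) - ln (v z)) |
   <= #|X|%:R * (ln b - ln a) * eps.
Proof.
move=> a0 ab hp hq hv hs he.
have -> : \sum_z p z * (ln (p z) - ln (v z)) - \sum_z q z * (ln (q z) - ln (v z)) =
  \sum_z (p z * (ln (p z) - ln (v z)) - q z * (ln (q z) - ln (v z)) - (p z - q z)).
  by rewrite !sumrB hs subrr subr0.
apply: (le_trans (ler_norm_sum _ _ _)).
have L0 : 0 <= ln b - ln a.
  by rewrite subr_ge0 ler_ln ?posrE // (lt_le_trans a0 ab).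
apply: le_trans (_ : \sum_(z : X) (eps * (ln b - ln a)) <= _).
  apply: ler_sum => z _; apply: (le_trans (@xlnx_abs _ _ _ _ _ a0 (hp z) (hq z) (hv z))).
  by apply: ler_wpM2r.
rewrite sumr_const -[eps * _ *+ _]mulr_natl.
by rewrite mulrA mulrAC.
Qed.

Lemma KL_eq (p v : X -> R) : (forall z, 0 < p z) -> (forall z, 0 < v z) ->
  KL p v = \sum_z p z * (ln (p z) - ln (v z)).
Proof.
move=> hp hv; apply: eq_bigr => z _.
by rewrite gt_eqF // ln_div ?posrE.
Qed.

Variable K : nat.

Definition Wv (P : 'I_K -> X -> R) (A : {set 'I_K}) (w : 'I_K -> R) :=
  fun a => (\sum_(i in A) w i * P i a) / (\sum_(i in A) w i).

Lemma Wsum (P : 'I_K -> X -> R) (A : {set 'I_K}) (w : 'I_K -> R) : is_dist_vec P -> 0 < \sum_(i in A) w i -> \sum_z Wv P A w z = 1.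
Proof.
move=> hP S0; rewrite /Wv -mulr_suml exchange_big /=.
rewrite (eq_bigr (fun i => w i)) ?divff ?gt_eqF //.
by move=> i _; rewrite -mulr_sumr (proj2 (hP i)) mulr1.
Qed.

Lemma Wrange (P : 'I_K -> X -> R) (A : {set 'I_K}) (w : 'I_K -> R) (a b : R) : (forall i z, a <= P i z <= b) -> (forall i, 0 <= w i) ->
  0 < \sum_(i in A) w i -> forall z, a <= Wv P A w z <= b.
Proof.
move=> hP hw S0 z; rewrite /Wv ler_pdivlMr // ler_pdivrMr // !mulr_sumr.
apply/andP; split; apply: ler_sum => i _.
  by rewrite mulrC; apply: ler_wpM2l => //; case/andP: (hP i z).
by rewrite [X in _ <= X]mulrC; apply: ler_wpM2l => //; case/andP: (hP i z).
Qed.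

Lemma gibbs (P : 'I_K -> X -> R) (A : {set 'I_K}) (w : 'I_K -> R) (V : X -> R) : (forall i z, 0 < P i z) -> (forall i, 0 <= w i) ->
  is_dist_vec P -> 0 < \sum_(i in A) w i -> (forall z, 0 < Wv P A w z) ->
  (forall z, 0 < V z) -> \sum_z V z = 1 ->
  \sum_(i in A) w i * KL (P i) (Wv P A w) <= \sum_(i in A) w i * KL (P i) V.
Proof.
move=> hP hw hd S0 hW hV sV.
rewrite -subr_ge0 -sumrB.
have -> : \sum_(i in A) (w i * KL (P i) V - w i * KL (P i) (Wv P A w)) =
   \sum_z (\sum_(i in A) w i * P i z) * (ln (Wv P A w z) - ln (V z)).
  rewrite (eq_bigr (fun i => \sum_z w i * P i z * (ln (Wv P A w z) - ln (V z)))).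
    rewrite exchange_big /=; apply: eq_bigr => z _; by rewrite mulr_suml.
  move=> i _; rewrite !KL_eq // -mulrBr -sumrB mulr_sumr; apply: eq_bigr => z _.
  ring.
have e : forall z, \sum_(i in A) w i * P i z = (\sum_(i in A) w i) * Wv P A w z.
  by move=> z; rewrite /Wv mulrC divfK ?gt_eqF.
apply: le_trans (_ : 0 <= (\sum_(i in A) w i) * \sum_z (Wv P A w z - V z)) _.
  by rewrite sumrB Wsum // sV subrr mulr0.
rewrite mulr_sumr; apply: ler_sum => z _; rewrite e -mulrA; apply: ler_wpM2l; first exact: ltW.
have h := @ln_le_sub1 _ (divr_gt0 (hV z) (hW z)).
rewrite ln_div ?posrE // in h.
have := ler_wpM2l (ltW (hW z)) h.
have ee : Wv P A w z * (V z / Wv P A w z) = V z.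
  by rewrite mulrCA divff ?gt_eqF ?mulr1.
rewrite [X in _ <= X]mulrBr mulr1 ee => h2.
lra.
Qed.

Lemma clu_one (P Q : 'I_K -> X -> R) (A : {set 'I_K}) (w : 'I_K -> R) (a b eps : R) :
  0 < a -> a <= b -> (forall i, 0 <= w i) -> is_dist_vec P -> is_dist_vec Q ->
  (forall i z, a <= P i z <= b) -> (forall i z, a <= Q i z <= b) ->
  (forall i z, `|P i z - Q i z| <= eps) -> 0 < \sum_(i in A) w i ->
  \sum_(i in A) w i * KL (P i) (Wv P A w) - \sum_(i in A) w i * KL (Q i) (Wv Q A w)
   <= (\sum_(i in A) w i) * (#|X|%:R * (ln b - ln a) * eps).
Proof.
move=> a0 ab hw hdP hdQ hP hQ he S0.
have hWP := @Wrange P A w a b hP hw S0; have hWQ := @Wrange Q A w a b hQ hw S0.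
have pos : forall (f : X -> R), (forall z, a <= f z <= b) -> forall z, 0 < f z.
  by move=> f hf z; case/andP: (hf z) => h _; exact: lt_le_trans h.
have posP : forall i z, 0 < P i z by move=> i; apply: pos.
have posQ : forall i z, 0 < Q i z by move=> i; apply: pos.
apply: le_trans (_ : _ <= \sum_(i in A) w i * KL (P i) (Wv Q A w)
                        - \sum_(i in A) w i * KL (Q i) (Wv Q A w)) _.
  rewrite lerD2r; apply: gibbs => //; first exact: pos.
    exact: pos.
  exact: Wsum.
rewrite -sumrB mulr_suml; apply: ler_sum => i _; rewrite -mulrBr.
apply: ler_wpM2l => //.
rewrite !KL_eq //; try exact: pos.
apply: le_trans (ler_norm _) _; apply: sum_bound => //.
by rewrite (proj2 (hdP i)) (proj2 (hdQ i)).
Qed.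

Lemma clu_bound (P Q : 'I_K -> X -> R) (A : {set 'I_K}) (w : 'I_K -> R) (a b eps : R) :
  0 < a -> a <= b -> 0 <= eps -> (forall i, 0 <= w i) -> is_dist_vec P -> is_dist_vec Q ->
  (forall i z, a <= P i z <= b) -> (forall i z, a <= Q i z <= b) ->
  (forall i z, `|P i z - Q i z| <= eps) ->
  `|Gclu P A w - Gclu Q A w| <= (\sum_(i in A) w i) * (#|X|%:R * (ln b - ln a) * eps).
Proof.
move=> a0 ab e0 hw hdP hdQ hP hQ he.
have L0 : 0 <= ln b - ln a.
  by rewrite subr_ge0 ler_ln ?posrE // (lt_le_trans a0 ab).
rewrite /Gclu; case: ifP => H.
  rewrite subrr normr0; apply: mulr_ge0; first by apply: sumr_ge0.
  by apply: mulr_ge0 => //; apply: mulr_ge0.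
have S0 : 0 < \sum_(i in A) w i.
  move/negbT: H => /forallPn [i]; rewrite negb_imply => /andP[iA wi].
  apply: lt_le_trans (_ : 0 < w i) _; first by rewrite lt_def wi hw.
  rewrite (bigD1 i) //= lerDl; apply: sumr_ge0 => j _; exact: hw.
rewrite -/(Wv P A w) -/(Wv Q A w).
rewrite ler_norml; apply/andP; split; last exact: clu_one.
rewrite lerNl opprB; apply: clu_one => // i z; rewrite distrC; exact: he.
Qed.

Lemma gsig_bound (P Q : 'I_K -> X -> R) (s : {set {set 'I_K}}) (w : 'I_K -> R) (a b eps : R) :
  0 < a -> a <= b -> 0 <= eps -> is_hypothesis s -> in_int_simplex w ->
  is_dist_vec P -> is_dist_vec Q ->
  (forall i z, a <= P i z <= b) -> (forall i z, a <= Q i z <= b) ->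
  (forall i z, `|P i z - Q i z| <= eps) ->
  `|gsig P s w - gsig Q s w| <= #|X|%:R * (ln b - ln a) * eps.
Proof.
move=> a0 ab e0 [_ [_ hdisj]] [hw w1] hdP hdQ hP hQ he.
have L0 : 0 <= ln b - ln a.
  by rewrite subr_ge0 ler_ln ?posrE // (lt_le_trans a0 ab).
have c0 : 0 <= #|X|%:R * (ln b - ln a) * eps by apply: mulr_ge0 => //; apply: mulr_ge0.
have hw' : forall i, 0 <= w i by move=> i; exact: ltW.
rewrite /gsig -sumrB; apply: le_trans (ler_norm_sum _ _ _) _.
apply: le_trans (_ : _ <= \sum_(A in s) (\sum_(i in A) w i) * (#|X|%:R * (ln b - ln a) * eps)) _.
  by apply: ler_sum => A _; apply: clu_bound.
have tr : finset.trivIset s by apply/finset.trivIsetP => A B hA hB; exact: hdisj.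
rewrite -mulr_suml.
have := @finset.big_trivIset _ _ _ (@GRing.add R) s w tr; rewrite /= => <-.
rewrite -[X in _ <= X]mul1r; apply: ler_wpM2r => //.
rewrite -w1 [X in _ <= X](bigID (fun i => i \in finset.cover s)) /= lerDl.
by apply: sumr_ge0 => i _.
Qed.

Lemma bigmin_diff (T : finType) (D : {pred T}) (f g : T -> R) (x0 y0 d : R) :
  `|x0 - y0| <= d -> (forall t, t \in D -> `|f t - g t| <= d) ->
  `|\big[Num.min/x0]_(t in D) f t - \big[Num.min/y0]_(t in D) g t| <= d.
Proof.
move=> h0 h; apply: (big_ind2 (fun x y => `|x - y| <= d)) => //.
move=> x1 x2 y1 y2 hx hy.
rewrite ler_norml in hx; rewrite ler_norml in hy.
case/andP: hx => hx1 hx2; case/andP: hy => hy1 hy2.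
rewrite ler_norml; case: (leP x1 y1) => h1; case: (leP x2 y2) => h2;
  rewrite ?(minElt h1) ?(minEle h1); apply/andP; split; lra.
Qed.

End Aux.

Theorem lemma6 (R : realType) (X : finType) (K : nat)
    (C : {set {set {set 'I_K}}}) (P : 'I_K -> X -> R) (eps : R) :
  (2 <= #|X|)%N -> (2 <= K)%N ->
  is_clustering_problem C ->
  is_dist_vec P ->
  0 < pmin P -> pmin P <= 1 / 2 ->
  0 < eps -> eps < pmin P / 2 ->
  forall (Q : 'I_K -> X -> R) (w : 'I_K -> R) (s : {set {set 'I_K}}),
    is_dist_vec Q -> supdist P Q <= eps ->
    in_int_simplex w -> s \in C ->
    let E := #|X|%:R * ln ((2 - pmin P) / pmin P) in
    `|gsig P s w - gsig Q s w| <= E * eps /\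
    `|Gsig C P s w - Gsig C Q s w| <= E * eps.
Proof.
move=> hX hK [hC2 hCh] hdP p0 ph e0 ehalf Q w s hdQ hsup hw sC E.
have pminle : forall i z, pmin P <= P i z.
  move=> i z; rewrite /pmin; apply: le_trans (bigmin_le _ i _) _.
  exact: bigmin_le.
have supge : forall i z, `|P i z - Q i z| <= eps.
  move=> i z; apply: le_trans hsup; rewrite /supdist.
  apply: le_trans (le_bigmax _ _ i); exact: (le_bigmax _ (fun a => `|P i a - Q i a|) z).
have Pup : forall i z, P i z <= 1 - pmin P.
  move=> i z.
  have [z' zz'] : exists z', z' != z.
    case: (pickP (predC1 z)) => [z' h|h]; first by exists z'.
    have := cardC1 z; rewrite (eq_card0 h) => /esym/eqP; rewrite -subn1 subn_eq0 leqNgt.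
    by rewrite (leq_trans _ hX).
  have : P i z + P i z' <= 1.
    rewrite -(proj2 (hdP i)) (bigD1 z) //= lerD2l (bigD1 z') //= lerDl.
    by apply: sumr_ge0 => x _; exact: (proj1 (hdP i)).
  have := pminle i z'; lra.
set p := pmin P in pminle Pup p0 ph ehalf.
have hP : forall i z, p / 2 <= P i z <= 1 - p / 2.
  by move=> i z; have := pminle i z; have := Pup i z; move=> h1 h2; apply/andP; split; lra.
have hQ : forall i z, p / 2 <= Q i z <= 1 - p / 2.
  move=> i z; have := pminle i z; have := Pup i z; have := supge i z.
  rewrite ler_norml => /andP[h3 h4] h1 h2; apply/andP; split; lra.
have a0 : 0 < p / 2 by lra.
have ab : p / 2 <= 1 - p / 2 by lra.
have e0' : 0 <= eps by lra.
have EE : E * eps = #|X|%:R * (ln (1 - p / 2) - ln (p / 2)) * eps.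
  rewrite /E -ln_div ?posrE; try lra.
  congr (_ * ln _ * _); rewrite -/p; by field; rewrite gt_eqF.
rewrite EE.
have gb : forall t, t \in C -> `|gsig P t w - gsig Q t w| <= #|X|%:R * (ln (1 - p / 2) - ln (p / 2)) * eps.
  by move=> t tC; apply: gsig_bound => //; apply: hCh.
split; first exact: gb.
rewrite /Gsig; case: pickP => [s0 hs0|_].
  apply: bigmin_diff; first by apply: gb; move: hs0; rewrite in_setD1 => /andP[].
  by move=> t; rewrite in_setD1 => /andP[_ tC]; apply: gb.
rewrite subrr normr0; apply: mulr_ge0 => //; apply: mulr_ge0 => //.
by rewrite subr_ge0 ler_ln ?posrE; lra.
Qed.
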